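(* Let $G_1,\dots,G_k$ be finitely many graphs which are pairwise consistent, and let $\overline r_1,\dots,\overline r_k$ be pairwise consistent rotation sequences such that the graphs $\overline r_1G_1,\dots,\overline r_kG_k$ are pairwise consistent. Then there exists a rotation sequence $\overline r$ such that $$\bigcup_{i=1}^k\overline r_iG_i=\overline r\bigcup_{i=1}^kG_i.$$
   Context: Fix $n\ge1$, ports $\pi=\{0,\dots,n+1\}$, gluings the odd permutations of $\pi$. A graph $G$ has vertices $V(G)$, semi-edges $S(G)$ (elements $(u\!:\!p)$) and edges $E(G)$ (elements $(u\!:\!p,\gamma,v\!:\!q)$) such that: no $u\!:\!p$ is both a semi-edge and the start of an edge; at most one edge starts at each $u\!:\!p$; each vertex has exactly $n+1$ ports appearing in semi-edges or edges; if $(u\!:\!p,\gamma,v\!:\!q)$ is an edge then $\gamma$ maps the ports of $u$ onto those of $v$, $\gamma(p)=q$, and $(v\!:\!q,\gamma^{-1},u\!:\!p)$ is an edge. Graphs $G,H$ are consistent iff for all $u\in V(G)\cap V(H)$, $i\in\pi$, $v\in V(G)\cup V(H)$, $j\in\pi$ and gluing $\gamma$: ($(u\!:\!i,\gamma,v\!:\!j)\in E(G)$ or $(u\!:\!i)\in S(G)$) iff ($(u\!:\!i,\gamma,v\!:\!j)\in E(H)$ or $(u\!:\!i)\in S(H)$). The union of consistent graphs is taken componentwise on vertices, edges and semi-edges. For a vertex $u$ and an even permutation $\rho$ of $\pi$, the vertex rotation $\rho_u$ replaces each edge $(u\!:\!p,\gamma,v\!:\!q)$ by $(u\!:\!\rho(p),\gamma\circ\rho^{-1},v\!:\!q)$,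 each edge $(v\!:\!q,\gamma^{-1},u\!:\!p)$ by $(v\!:\!q,\rho\circ\gamma^{-1},u\!:\!\rho(p))$, each semi-edge $(u\!:\!p)$ by $(u\!:\!\rho(p))$, leaving the rest unchanged. A rotation sequence is a finite composition of vertex rotations. Since vertex rotations at distinct vertices commute, for a rotation sequence $\overline r$ and a vertex $u$ one defines $(\overline r/u)$ as the ordered composite of the vertex rotations of $\overline r$ acting at $u$. Two rotation sequences $\overline r_1,\overline r_2$ are consistent iff $(\overline r_1/u)=(\overline r_2/u)$ for every vertex $u$ on which both act. *)

(* Defs.v *)
From mathcomp Require Import all_boot all_order all_fingroup.
Set Implicit Arguments. Unset Strict Implicit. Unset Printing Implicit Defensive.

Section Graphs.
Variables (n : nat) (V : eqType).

Definition port := 'I_n.+2.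
Definition gluing (g : {perm port}) : bool := odd_perm g.

(* A (pre)graph: vertices, semi-edges (u:p), edges (u:p, gamma, v:q). *)
Record graph := Graph {
  gV : V -> Prop;
  gS : V -> port -> Prop;
  gE : V -> port -> {perm port} -> V -> port -> Prop }.

Definition used (G : graph) (u : V) (p : port) : Prop :=
  gS G u p \/ exists g v q, gE G u p g v q.

Definition is_graph (G : graph) : Prop :=
  (forall u p, gS G u p -> gV G u) /\
  (forall u p g v q, gE G u p g v q -> [/\ gV G u, gV G v & gluing g]) /\
  (forall u p g v q, gS G u p -> ~ gE G u p g v q) /\
  (forall u p g v q g' v' q', gE G u p g v q -> gE G u p g' v' q' ->
       [/\ g = g', v = v' & q = q']) /\
  (forall u, gV G u -> exists P : {set port},
       #|P| = n.+1 /\ forall p, p \in P <-> used G u p) /\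
  (forall u p g v q, gE G u p g v q ->
       [/\ forall p', used G u p' <-> used G v (g p'),
           g p = q & gE G v q g^-1 u p]).

Definition consistent (G H : graph) : Prop :=
  forall u i v j g, gV G u -> gV H u -> (gV G v \/ gV H v) -> gluing g ->
    ((gE G u i g v j \/ gS G u i) <-> (gE H u i g v j \/ gS H u i)).

Definition union (G H : graph) : graph :=
  Graph (fun u => gV G u \/ gV H u)
        (fun u p => gS G u p \/ gS H u p)
        (fun u p g v q => gE G u p g v q \/ gE H u p g v q).

Definition bigunion (k : nat) (G : 'I_k -> graph) : graph :=
  Graph (fun u => exists i, gV (G i) u)
        (fun u p => exists i, gS (G i) u p)
        (fun u p g v q => exists i, gE (G i) u p g v q).

Definition loc (u : V) (rho : {perm port}) (x : V) : {perm port} :=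
  if x == u then rho else 1%g.

(* rho_u: edge (a:p, g, b:q) becomes (a:f_a p, f_b o g o f_a^-1, b:f_b q)
   where f_u = rho and f_x = id otherwise; semi-edge (u:p) becomes (u:rho p). *)
Definition vrot (u : V) (rho : {perm port}) (G : graph) : graph :=
  Graph (gV G)
        (fun a p' => exists p, gS G a p /\ p' = loc u rho a p)
        (fun a p' g' b q' => exists p g q, [/\ gE G a p g b q,
              p' = loc u rho a p, q' = loc u rho b q &
              g' = ((loc u rho a)^-1 * g * loc u rho b)%g]).

Definition rotseq := seq (V * {perm port}).
Definition is_rotseq (r : rotseq) : bool := all (fun x => ~~ odd_perm x.2) r.

Definition rapply (r : rotseq) (G : graph) : graph :=
  foldl (fun H x => vrot x.1 x.2 H) G r.

Definition acts (r : rotseq) (u : V) : bool := has (fun x => x.1 == u) r.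

(* (r/u): ordered composite of the rotations of r at u.  In mathcomp,
   (s * t) x = t (s x), so the list-ordered product is the composite
   "last o ... o first". *)
Definition rdiv (r : rotseq) (u : V) : {perm port} :=
  (\prod_(x <- r | x.1 == u) x.2)%g.

Definition rconsistent (r1 r2 : rotseq) : Prop :=
  forall u, acts r1 u -> acts r2 u -> rdiv r1 u = rdiv r2 u.

End Graphs.

(* Main.v *)
Require Import Defs.
From mathcomp Require Import all_boot all_order all_fingroup.
From Stdlib Require Import ClassicalEpsilon FunctionalExtensionality PropExtensionality.
Set Implicit Arguments. Unset Strict Implicit. Unset Printing Implicit Defensive.

Local Open Scope group_scope.
Section Aux.
Variables (n : nat) (V : eqType).
Local Notation graph := (graph n V).
Local Notation port := (port n).

Definition wf (A : graph) : Prop :=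
  (forall u p, gS A u p -> gV A u) /\
  (forall u p g v q, gE A u p g v q -> [/\ gV A u, gV A v & gluing g]) /\
  (forall u p g v q, gS A u p -> ~ gE A u p g v q) /\
  (forall u p g v q g' v' q', gE A u p g v q -> gE A u p g' v' q' ->
       [/\ g = g', v = v' & q = q']).

Lemma is_graph_wf A : is_graph A -> wf A.
Proof. by case=> [h1 [h2 [h3 [h4 _]]]]. Qed.

Lemma graph_ext (A B : graph) :
  (forall u, gV A u <-> gV B u) ->
  (forall u p, gS A u p <-> gS B u p) ->
  (forall u p g v q, gE A u p g v q <-> gE B u p g v q) -> A = B.
Proof.
case: A => a1 a2 a3; case: B => b1 b2 b3 /= h1 h2 h3.
have -> : a1 = b1 by apply: functional_extensionality => u;
  apply: propositional_extensionality.
have -> : a2 = b2 by do 2 (apply: functional_extensionality => ?);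
  apply: propositional_extensionality.
have -> : a3 = b3 by do 5 (apply: functional_extensionality => ?);
  apply: propositional_extensionality.
by [].
Qed.

Lemma vrot_S u rho (H : graph) a p' :
  gS (vrot u rho H) a p' <-> gS H a ((loc u rho a)^-1 p').
Proof.
split=> [[p [hp ->]]|h]; first by rewrite permK.
by exists ((loc u rho a)^-1 p'); rewrite permKV.
Qed.

Lemma vrot_E u rho (H : graph) a p' g' b q' :
  gE (vrot u rho H) a p' g' b q' <->
  gE H a ((loc u rho a)^-1 p') (loc u rho a * g' * (loc u rho b)^-1)%g b
     ((loc u rho b)^-1 q').
Proof.
split=> [[p [g [q [hp -> -> ->]]]]|h].
  by rewrite !permK !mulgA mulgV mul1g mulgK.
exists ((loc u rho a)^-1 p'), (loc u rho a * g' * (loc u rho b)^-1)%g,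
  ((loc u rho b)^-1 q'); split; rewrite ?permKV //.
by rewrite !mulgA mulVg mul1g mulgKV.
Qed.

Lemma rdiv_rcons (r : rotseq n V) x a :
  rdiv (rcons r x) a = (rdiv r a * loc x.1 x.2 a)%g.
Proof.
rewrite /rdiv big_rcons /loc eq_sym; case: eqP => _ //; by rewrite mulg1.
Qed.

Lemma rapply_V (r : rotseq n V) G : gV (rapply r G) = gV G.
Proof.
elim/last_ind: r => [//|r x IH].
by rewrite /rapply foldl_rcons /=.
Qed.

Lemma rapply_S (r : rotseq n V) G a p' :
  gS (rapply r G) a p' <-> gS G a ((rdiv r a)^-1 p').
Proof.
elim/last_ind: r a p' => [|r x IH] a p'.
  by rewrite /rdiv big_nil invg1 perm1.
rewrite /rapply foldl_rcons -/(rapply r G) vrot_S IH rdiv_rcons invMg permM.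
by [].
Qed.

Lemma rapply_E (r : rotseq n V) G a p' g' b q' :
  gE (rapply r G) a p' g' b q' <->
  gE G a ((rdiv r a)^-1 p') (rdiv r a * g' * (rdiv r b)^-1)%g b
     ((rdiv r b)^-1 q').
Proof.
elim/last_ind: r a p' g' b q' => [|r x IH] a p' g' b q'.
  by rewrite /rdiv !big_nil invg1 !perm1 mul1g mulg1. 
rewrite /rapply foldl_rcons -/(rapply r G) vrot_E IH !rdiv_rcons !invMg !permM.
by rewrite !mulgA.
Qed.

Lemma rdiv_even (r : rotseq n V) a : is_rotseq r -> ~~ odd_perm (rdiv r a).
Proof.
move=> /allP hr; rewrite /rdiv big_seq_cond.
apply: (big_ind (fun s : {perm port} => ~~ odd_perm s)).
- by rewrite odd_perm1.
- by move=> s t hs ht; rewrite odd_permM (negbTE hs) (negbTE ht).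
- by move=> x /andP [/hr hx _].
Qed.

Lemma wf_rapply (r : rotseq n V) G : is_rotseq r -> wf G -> wf (rapply r G).
Proof.
move=> hr [h1 [h2 [h3 h4]]]; split; [|split; [|split]].
- by move=> u p /rapply_S /h1; rewrite rapply_V.
- move=> u p g v q /rapply_E /h2 [hu hv hg]; rewrite rapply_V; split=> //.
  move: hg; rewrite /gluing !odd_permM odd_permV.
  by rewrite (negbTE (rdiv_even u hr)) (negbTE (rdiv_even v hr)) /= addbF.
- by move=> u p g v q /rapply_S hs /rapply_E he; apply: (h3 _ _ _ _ _ hs he).
- move=> u p g v q g' v' q' /rapply_E he /rapply_E he'.
  case: (h4 _ _ _ _ _ _ _ _ he he') => eg ev; subst v' => eq.
  split=> //.
    by move: eg => /mulIg /mulgI.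
  by move/(congr1 (rdiv r v)): eq; rewrite !permKV.
Qed.

Definition g0 : {perm port} := tperm ord0 ord_max.
Lemma g0_glu : gluing g0.
Proof. by rewrite /gluing odd_tperm. Qed.

Lemma cons_S (A B : graph) u p : consistent A B -> wf A -> wf B ->
  gV A u -> gV B u -> gS B u p -> gS A u p.
Proof.
move=> hc [_ [_ [_ h4]]] _ hA hB hs.
have h := fun j => proj2 (hc u p u j g0 hA hB (or_introl hA) g0_glu) (or_intror hs).
case: (h ord0) => [e1|//]; case: (h ord_max) => [e2|//].
by case: (h4 _ _ _ _ _ _ _ _ e1 e2) => _ _ /(congr1 val).
Qed.

Lemma cons_S' (A B : graph) u p : consistent A B -> wf A -> wf B ->
  gV A u -> gV B u -> gS A u p -> gS B u p.
Proof.
move=> hc _ [_ [_ [_ h4]]] hA hB hs.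
have h := fun j => proj1 (hc u p u j g0 hA hB (or_introl hA) g0_glu) (or_intror hs).
case: (h ord0) => [e1|//]; case: (h ord_max) => [e2|//].
by case: (h4 _ _ _ _ _ _ _ _ e1 e2) => _ _ /(congr1 val).
Qed.

Lemma cons_E (A B : graph) u p g v q : consistent A B -> wf A -> wf B ->
  gV B u -> gE A u p g v q -> gE B u p g v q.
Proof.
move=> hc wA wB hB he.
have [hu hv hg] := (proj1 (proj2 wA)) _ _ _ _ _ he.
case: (proj1 (hc u p v q g hu hB (or_introl hv) hg) (or_introl he)) => // hs.
by case: (proj1 (proj2 (proj2 wA)) _ _ g v q (cons_S hc wA wB hu hB hs)).
Qed.

Lemma cons_E' (A B : graph) u p g v q : consistent A B -> wf A -> wf B ->
  gV A u -> gE B u p g v q -> gE A u p g v q.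
Proof.
move=> hc wA wB hA he.
have [hu hv hg] := (proj1 (proj2 wB)) _ _ _ _ _ he.
case: (proj2 (hc u p v q g hA hu (or_intror hv) hg) (or_introl he)) => // hs.
by case: (proj1 (proj2 (proj2 wB)) _ _ g v q (cons_S' hc wA wB hA hu hs)).
Qed.

Section Fam.
Variables (k : nat) (H : 'I_k -> graph).
Hypothesis wfH : forall i, wf (H i).
Hypothesis cH : forall i j, i != j -> consistent (H i) (H j).

Lemma famS i j u p : gV (H j) u -> gS (H i) u p -> gS (H j) u p.
Proof.
case: (eqVneq i j) => [->//|ne] hj hs.
apply: (cons_S' (cH ne)) => //; exact: (proj1 (wfH i) _ _ hs).
Qed.

Lemma famE i j u p g v q : gV (H j) u -> gE (H i) u p g v q -> gE (H j) u p g v q.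
Proof.
case: (eqVneq i j) => [->//|ne] hj he.
exact: (cons_E (cH ne)).
Qed.
End Fam.

End Aux.

Definition pb (P : Prop) : bool := if excluded_middle_informative P then true else false.
Lemma pbP (P : Prop) : reflect P (pb P).
Proof. by rewrite /pb; case: excluded_middle_informative => h; constructor. Qed.

Theorem mainTheorem9 (n : nat) (V : eqType) (k : nat)
    (G : 'I_k -> graph n V) (r : 'I_k -> rotseq n V) :
  1 <= n ->
  (forall i, is_graph (G i)) ->
  (forall i, is_rotseq (r i)) ->
  (forall i j, i != j -> consistent (G i) (G j)) ->
  (forall i j, i != j -> rconsistent (r i) (r j)) ->
  (forall i j, i != j -> consistent (rapply (r i) (G i)) (rapply (r j) (G j))) ->
  exists r0 : rotseq n V, is_rotseq r0 /\
    bigunion (fun i => rapply (r i) (G i)) = rapply r0 (bigunion G).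
Proof.
move=> _ hG hr cG _ cR.
have wG : forall i, wf (G i) by move=> i; apply: is_graph_wf.
have wR : forall i, wf (rapply (r i) (G i)) by move=> i; apply: wf_rapply.
set idx := fun a => [pick i | pb (gV (G i) a)].
set f := fun a => if idx a is Some i then rdiv (r i) a else 1.
have hidx : forall i a, gV (G i) a -> exists2 i0, idx a = Some i0 & gV (G i0) a.
  move=> i a ha; rewrite /idx; case: pickP => [i0 /pbP h|/(_ i) /pbP //].
  by exists i0.
have hedge : forall j a p g b q, gE (G j) a p g b q -> idx a = idx b.
  move=> j a p g b q he; apply: eq_pick => i.
  have [ha hb _] := (proj1 (proj2 (wG j))) _ _ _ _ _ he.
  apply/pbP/pbP => hi.
    by have := famE wG cG hi he => /(proj1 (proj2 (wG i))) [].
  have := (proj2 (proj2 (proj2 (proj2 (proj2 (hG j)))))) _ _ _ _ _ he => [[_ _ he']].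
  by have := famE wG cG hi he' => /(proj1 (proj2 (wG i))) [].
set W := flatten [seq map fst (r i) | i <- enum 'I_k].
exists [seq (x, f x) | x <- undup W].
have hrdiv : forall a, rdiv [seq (x, f x) | x <- undup W] a = f a.
  move=> a; rewrite /rdiv big_map /=.
  case: (boolP (a \in W)) => aW.
    rewrite -big_filter.
    have -> : [seq i <- undup W | i == a] = [:: a].
      rewrite (@eq_filter _ _ (pred1 a)) // filter_pred1_uniq ?undup_uniq //.
      by rewrite mem_undup.
    by rewrite big_seq1.
  rewrite big1_seq; last first.
    by move=> x /andP [/eqP -> ]; rewrite mem_undup (negbTE aW).
  rewrite /f; case: (idx a) => // i.
  rewrite /rdiv big1_seq // => x /andP [/eqP xa xr].
  case/negP: aW; apply/flattenP; exists (map fst (r i)).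
    by apply/mapP; exists i; rewrite ?mem_enum.
  by rewrite -xa; apply: map_f.
split.
  apply/allP => /= x /mapP [y _ ->] /=; rewrite /f.
  by case: (idx y) => // [i|]; [apply: rdiv_even | rewrite odd_perm1].
apply: graph_ext => [u|a p|a p g b q] /=.
- rewrite rapply_V /=; split=> [[i]|[i]]; rewrite ?rapply_V => h; exists i; move: h; rewrite ?rapply_V //.
- apply: (iff_trans _ (iff_sym (rapply_S _ _ _ _))); rewrite /= hrdiv; split.
    case=> i hs.
    have hi : gV (G i) a by move: (proj1 (wR i) _ _ hs); rewrite rapply_V.
    have [i0 ei0 hi0] := hidx _ _ hi.
    exists i0; rewrite /f ei0; apply/rapply_S.
    by apply: (famS wR cR (i := i)) => //; rewrite rapply_V.
  case=> j hs; have hj := proj1 (wG j) _ _ hs.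
  have [i0 ei0 hi0] := hidx _ _ hj.
  exists i0; apply/rapply_S; move: hs; rewrite /f ei0 => hs.
  exact: (famS wG cG hi0 hs).
- apply: (iff_trans _ (iff_sym (rapply_E _ _ _ _ _ _ _))); rewrite /= !hrdiv; split.
    case=> i he.
    have hi : gV (G i) a by move: (proj1 (proj2 (wR i)) _ _ _ _ _ he); rewrite rapply_V => [[]].
    have [i0 ei0 hi0] := hidx _ _ hi.
    have he0 : gE (rapply (r i0) (G i0)) a p g b q.
      by apply: (famE wR cR (i := i)) => //; rewrite rapply_V.
    exists i0; move/rapply_E: (he0) => he1.
    by rewrite /f -(hedge _ _ _ _ _ _ he1) ei0.
  case=> j he; have [hj _ _] := proj1 (proj2 (wG j)) _ _ _ _ _ he.
  have eab := hedge _ _ _ _ _ _ he.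
  have [i0 ei0 hi0] := hidx _ _ hj.
  exists i0; apply/rapply_E; move: he; rewrite /f -eab ei0 => he.
  exact: (famE wG cG hi0 he).
Qed.
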